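(* Let $W$ be the Witt algebra with basis $\{x_n\mid n\in\mathbb{Z}\}$ and bracket $[x_m,x_n]=(n-m)x_{m+n}$, and let $V$ be a left-symmetric algebra structure on the underlying space of $W$ with product $x_mx_n=f(m,n)x_{m+n}$ for some $f:\mathbb{Z}\times\mathbb{Z}\to\mathbb{C}$ and with $x_mx_n-x_nx_m=(n-m)x_{m+n}$. Regard $V$ as a $W$-module via left multiplication. Then for no $\alpha\in\mathbb{C}$ is $V$ isomorphic as a $W$-module to $A_\alpha$, the $W$-module with basis $\{v_n\mid n\in\mathbb{Z}\}$ and action $x_iv_n=(n+i)v_{n+i}$ for $n\neq0$, $x_iv_0=i(\alpha+i)v_i$.
   Context: A left-symmetric algebra is a vector space with bilinear product satisfying $(xy)z-x(yz)=(yx)z-y(xz)$; left multiplication then gives a representation of the commutator Lie algebra. *)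

(* Defs.v *)
From HB Require Import structures.
From mathcomp Require Import all_boot all_order all_algebra.
From mathcomp Require Import complex.
From mathcomp Require Import Rstruct.
From Stdlib Require Import Reals.
Set Implicit Arguments. Unset Strict Implicit. Unset Printing Implicit Defensive.
Import Order.TTheory GRing.Theory Num.Theory.
Local Open Scope ring_scope.

Definition C : Type := complex R.

(* Vectors of a space with basis indexed by Z are finitely supported
   coefficient functions Z -> C. *)
Definition finsupp (u : int -> C) : Prop :=
  exists s : seq int, forall k, k \notin s -> u k = 0.

(* Left-symmetric product x_m x_n = f(m,n) x_(m+n):
   (x_m x_n) x_p - x_m (x_n x_p) = (x_n x_m) x_p - x_n (x_m x_p). *)
Definition left_symmetric (f : int -> int -> C) : Prop :=
  forall m n p : int,
    f m n * f (m + n) p - f n p * f m (n + p)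
    = f n m * f (n + m) p - f m p * f n (m + p).

Definition witt_commutator (f : int -> int -> C) : Prop :=
  forall m n : int, f m n - f n m = (n - m)%:~R.

(* Left multiplication action of x_i on V: x_i (sum u_n x_n) = sum u_n f(i,n) x_(i+n). *)
Definition actV (f : int -> int -> C) (i : int) (u : int -> C) : int -> C :=
  fun k => f i (k - i) * u (k - i).

Definition actA (alpha : C) (i : int) (u : int -> C) : int -> C :=
  fun k => (if k - i == 0 then i%:~R * (alpha + i%:~R) else k%:~R) * u (k - i).

Definition W_module_iso (f : int -> int -> C) (alpha : C)
    (phi : (int -> C) -> (int -> C)) : Prop :=
  [/\ forall u, finsupp u -> finsupp (phi u),
      forall (a : C) u v, finsupp u -> finsupp v ->
        phi (fun k => a * u k + v k) = (fun k => a * phi u k + phi v k),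
      forall u v, finsupp u -> finsupp v -> phi u = phi v -> u = v,
      forall w, finsupp w -> exists2 u, finsupp u & phi u = w
    & forall i u, finsupp u -> phi (actV f i u) = actA alpha i (phi u)].

(* Main.v *)
Require Import Defs.
From mathcomp Require Import all_boot all_order all_algebra.
From mathcomp Require Import complex.
From mathcomp Require Import Rstruct.
From Stdlib Require Import FunctionalExtensionality Classical.
From mathcomp Require Import zify.
Import Order.TTheory GRing.Theory Num.Theory.
Local Open Scope ring_scope.

Definition delta (n : int) : int -> C := fun k => if k == n then (1:C) else 0.

Lemma actA0 (a : C) i w : actA a i w 0 = 0.
Proof.
rewrite /actA sub0r oppr_eq0; case: eqP => [->|_]; by rewrite ?mulr0z ?mul0r.
Qed.

Lemma fs_actV f i u : finsupp u -> finsupp (actV f i u).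
Proof.
case=> s Hs; exists (map (fun x => x + i) s) => k hk.
rewrite /actV Hs ?mulr0 //; apply: contra hk => h.
by apply/mapP; exists (k - i) => //; rewrite subrK.
Qed.

Theorem theorem3p6 (f : int -> int -> C) :
  left_symmetric f -> witt_commutator f ->
  forall alpha : C, ~ exists phi, W_module_iso f alpha phi.
Proof.
move=> _ Hc alpha [phi [Hfs Hlin Hinj Hsurj Hact]].
have fs0 : finsupp (fun _ : int => (0:C)) by exists [::].
have fsd : forall n, finsupp (delta n).
  by move=> n; exists [:: n] => k; rewrite inE /delta => /negbTE ->.
have phi0 : phi (fun _ => 0) = (fun _ => 0).
  move: (Hlin (-1) _ _ fs0 fs0).
  rewrite (_ : (fun k : int => -1 * (0:C) + 0) = (fun _ => 0)); last first.
    by apply: functional_extensionality => k; rewrite mulr0 addr0.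
  move=> H; apply: functional_extensionality => k.
  by have := congr1 (fun g => g k) H => /= ->; rewrite mulN1r addNr.
have [u0 fu0 Hu0] := Hsurj (delta 0) (fsd 0).
have A0 : actV f 0 u0 = fun _ => 0.
  apply: Hinj => //; first exact: fs_actV.
  rewrite Hact // Hu0 phi0; apply: functional_extensionality => k.
  rewrite /actA /delta subr0.
  by case: eqP => _; rewrite ?mulr1 ?mulr0z ?mul0r ?mulr0.
have [n0 Hn0] : exists n0, u0 n0 != 0.
  apply: NNPP => H.
  have e : u0 = fun _ => 0.
    apply: functional_extensionality => k; apply/eqP; apply: contraT => hk.
    by case: H; exists k.
  move: Hu0; rewrite e phi0 => /(congr1 (fun g => g 0)); rewrite /delta eqxx.
  by move=> /esym /eqP; rewrite oner_eq0.
have F0 : f 0 n0 = 0.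
  have := congr1 (fun g => g n0) A0; rewrite /actV subr0 => /eqP.
  by rewrite mulf_eq0 (negbTE Hn0) orbF => /eqP.
have P : phi (delta n0) 0 != 0.
  have Z : phi (delta n0) = (fun _ => 0) -> False.
    rewrite -phi0 => /(Hinj _ _ (fsd n0) fs0) /(congr1 (fun g => g n0)).
    by rewrite /delta eqxx => /eqP; rewrite oner_eq0.
  apply/negP => /eqP h0; apply: Z; apply: functional_extensionality => k.
  have [->//|kn0] := eqVneq k 0.
  have : actV f 0 (delta n0) = fun _ => 0.
    apply: functional_extensionality => j; rewrite /actV /delta subr0.
    by case: eqP => [->|]; rewrite ?F0 ?mul0r ?mulr0.
  move/(congr1 phi); rewrite Hact // phi0 => /(congr1 (fun g => g k)).
  rewrite /actA subr0 ifN; last exact: kn0.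
  move=> /eqP; rewrite mulf_eq0 intr_eq0 => /orP [] /eqP // e.
  by rewrite e eqxx in kn0.
have Fz : forall i, f i (n0 - i) = 0.
  move=> i.
  have e : actV f i (delta (n0 - i)) = fun k => f i (n0 - i) * delta n0 k + (fun _ => 0) k.
    apply: functional_extensionality => k; rewrite /actV /delta addr0.
    have [->|ne] := eqVneq k n0; first by rewrite !eqxx mulr1.
    rewrite ifN; last first.
      apply: contra ne => /eqP h; apply/eqP.
      by rewrite -(subrK i k) h subrK.
    by rewrite !mulr0.
  have := congr1 phi e; rewrite (Hlin _ (delta n0) (fun _ => 0)) // Hact //.
  move=> /(congr1 (fun g => g 0)) /=; rewrite actA0 phi0 addr0 => /esym /eqP.
  by rewrite mulf_eq0 (negbTE P) orbF => /eqP.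
have H : forall i, n0 - i - i = 0.
  move=> i; have h := Hc i (n0 - i); have G := Fz (n0 - i).
  rewrite (_ : n0 - (n0 - i) = i) in G; last by rewrite opprB addrC subrK.
  by move: h; rewrite Fz G subrr => /esym /eqP; rewrite intr_eq0 => /eqP.
have h0 := H 0; have h1 := H 1.
rewrite !subr0 in h0; subst n0.
lia. Qed.
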